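(* Let $(X_i)_{i\in\mathbb{Z}}$ be a finite-energy process over a countable alphabet $\mathbb{X}$. Then for every $q>0$, $$\sup_{n\ge2}\mathbb{E}\left[\left(\frac{\mathbf{L}(X_{1:n})}{\log n}\right)^q\right]<\infty.$$
   Context: A stationary process is finite-energy if there are constants $c<1$ and $K$ with $P(X_{n+1:n+m}=u\mid X_{1:n}=w)\le Kc^m$ whenever $P(X_{1:n}=w)>0$, $n,m\in\mathbb{N}$. $\mathbf{L}(w):=\max\{|s|: w=x_1sy_1=x_2sy_2,\ x_1\ne x_2\}$ with $s,x_i,y_i$ finite (possibly empty) strings: the maximal length of a possibly overlapping repeat in $w$. $\log$ is natural. *)

(* Defs.v *)
From HB Require Import structures.
From mathcomp Require Import all_boot all_order all_algebra.
From mathcomp Require Import all_classical all_reals all_analysis.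
Set Implicit Arguments. Unset Strict Implicit. Unset Printing Implicit Defensive.
Import Order.TTheory GRing.Theory Num.Theory.
Local Open Scope ring_scope.
Local Open Scope classical_set_scope.

(* L(w): maximal length k of a (possibly overlapping) repeat in w, i.e. the
   largest k such that the factor of length k starting at position i equals
   the factor of length k starting at position j, for two distinct positions
   i <> j (positions i = |x1|, j = |x2| in  w = x1 s y1 = x2 s y2). *)
Definition maxrep {A : eqType} (w : seq A) : nat :=
  \max_(0 <= i < (size w).+1) \max_(0 <= j < (size w).+1)
   \max_(0 <= k < (size w).+1 | [&& i != j, (i + k <= size w)%N,
                                  (j + k <= size w)%N &
                                  take k (drop i w) == take k (drop j w)]) k.

(* the block X_{t+1:t+n} = (X_{t+1}, ..., X_{t+n}) *)
Definition blk {T A : Type} (X : int -> T -> A) (t : int) (n : nat) (x : T)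
  : seq A := [seq X (t + (i%:Z))%R x | i <- iota 1 n].

Section Process.
Context {d : measure_display} {T : measurableType d} {R : realType}.
Context (P : probability T R) {A : countType}.

Definition process (X : int -> T -> A) : Prop :=
  forall (i : int) (a : A), measurable (X i @^-1` [set a]).

Definition stationary (X : int -> T -> A) : Prop :=
  forall (s : seq int) (t : int) (w : seq A),
    P [set x : T | [seq X i x | i <- s] = w] =
    P [set x : T | [seq X (i + t)%R x | i <- s] = w].

Definition finite_energy (X : int -> T -> A) : Prop :=
  exists (c K : R), c < 1 /\
    forall (n m : nat) (w u : seq A), (0 < n)%N -> (0 < m)%N ->
      (0 < P [set x : T | blk X 0 n x = w])%E ->
      fine (P [set x : T | blk X 0 n x = w /\ blk X n%:Z m x = u])
        / fine (P [set x : T | blk X 0 n x = w]) <= K * c ^+ m.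
End Process.

(* Main.v *)
Require Import Defs.
From HB Require Import structures.
From mathcomp Require Import all_boot all_order all_algebra.
From mathcomp Require Import all_classical all_reals all_analysis.
From mathcomp Require Import zify ring lra.
Import Order.TTheory GRing.Theory Num.Theory.
Local Open Scope ring_scope.
Set Implicit Arguments. Unset Strict Implicit. Unset Printing Implicit Defensive.
Section Seqs.
Context {T A : Type} (X : int -> T -> A).

Lemma size_blk t n x : size (blk X t n x) = n.
Proof. by rewrite /blk size_map size_iota. Qed.

Lemma blk_split t m1 m2 x :
  blk X t (m1 + m2) x = blk X t m1 x ++ blk X (t + m1%:Z) m2 x.
Proof.
rewrite /blk iotaD map_cat; congr (_ ++ _).
rewrite (_ : (1 + m1)%N = (m1 + 1)%N); last by rewrite addnC.
rewrite iotaDl -map_comp.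
by apply: eq_map => i /=; rewrite PoszD addrA.
Qed.

Lemma nth_blk a0 t n x l : (l < n)%N -> nth a0 (blk X t n x) l = X (t + l.+1%:Z) x.
Proof. by move=> ln; rewrite /blk (nth_map 0%N) ?size_iota // nth_iota // add1n. Qed.

Lemma take_drop_blk n i k x : (i + k <= n)%N ->
  take k (drop i (blk X 0 n x)) = blk X i%:Z k x.
Proof.
move=> h; rewrite -(subnKC h) -addnA blk_split drop_size_cat ?size_blk //.
by rewrite add0r blk_split take_size_cat ?size_blk.
Qed.

Lemma take_blk t m r x : take m (blk X t (m + r) x) = blk X t m x.
Proof. by rewrite blk_split take_size_cat ?size_blk. Qed.

Lemma drop_blk t m r x : drop m (blk X t (m + r) x) = blk X (t + m%:Z) r x.
Proof. by rewrite blk_split drop_size_cat ?size_blk. Qed.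

Definition per (a0 : A) (p k : nat) (v : seq A) := mkseq (fun t => nth a0 v (t %% p)) k.

Lemma per_blk a0 (i : int) p k x : (0 < p)%N ->
  blk X i k x = blk X (i + p%:Z) k x ->
  blk X (i + p%:Z) k x = per a0 p k (blk X i p x).
Proof.
move=> p0 E.
pose g l := X (i + l.+1%:Z) x.
have H t : (t < k)%N -> g t = g (p + t)%N.
  move=> tk; have := congr1 (nth a0 ^~ t) E; rewrite !nth_blk // /g.
  by rewrite -addrA -PoszD addnS.
apply: (@eq_from_nth _ a0); first by rewrite size_blk size_mkseq.
move=> t; rewrite size_blk => tk.
rewrite nth_blk // nth_mkseq // nth_blk ?ltn_pmod //.
rewrite -addrA -PoszD addnS.
change (g (p + t)%N = g (t %% p)%N).
elim: t {-2}t (leqnn t) tk => [|N IH] t tN tk.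
  move: tN tk; rewrite leqn0 => /eqP -> k0.
  by rewrite mod0n (H 0%N k0) addn0.
case: (ltnP t p) => tp; first by rewrite modn_small // -H.
rewrite -(subnKC tp) modnDl -H; last by rewrite (subnKC tp).
rewrite (subnKC tp) -[X in g X](subnKC tp) IH //.
- lia.
- lia.
Qed.
End Seqs.

Section Maxrep.
Context {A : eqType}.

Lemma maxrep_size (w : seq A) : (maxrep w <= size w)%N.
Proof.
rewrite /maxrep; apply/bigmax_leqP_seq => i _ _; apply/bigmax_leqP_seq => j _ _.
apply/bigmax_leqP_seq => k; rewrite mem_index_iota => /andP[_ ks] _.
by rewrite -ltnS.
Qed.

Lemma maxrep_ge (w : seq A) k : (k <= maxrep w)%N -> (0 < k)%N ->
  exists i j, [/\ i != j,
     (i + k <= size w)%N, (j + k <= size w)%N &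
     take k (drop i w) = take k (drop j w)].
Proof.
move=> km k0; apply: contrapT => H; move: km; apply/negP; rewrite -ltnNge.
have : (maxrep w <= k.-1)%N; last by move=> h; apply: (leq_ltn_trans h); rewrite prednK.
rewrite /maxrep; apply/bigmax_leqP_seq => i; rewrite mem_index_iota => /andP[_ iw] _.
apply/bigmax_leqP_seq => j; rewrite mem_index_iota => /andP[_ jw] _.
apply/bigmax_leqP_seq => k' _ /and4P[ij ik jk /eqP e].
rewrite -ltnS prednK //; rewrite ltnNge; apply/negP => kk'.
apply: H; exists i, j; split => //.
- by apply: leq_trans ik; rewrite leq_add2l.
- by apply: leq_trans jk; rewrite leq_add2l.
by rewrite -(take_takel _ kk') e take_takel.
Qed.
End Maxrep.

Local Open Scope classical_set_scope.
Section Meas.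
Context {d : measure_display} {T : measurableType d} {A : countType}.
Context (X : int -> T -> A) (hX : forall (i : int) (a : A), measurable (X i @^-1` [set a])).

Lemma meas_map (s : seq int) (w : seq A) :
  measurable [set x | [seq X i x | i <- s] = w].
Proof.
elim: s w => [|i s IH] [|a w] /=.
- by rewrite (_ : [set _ | _] = setT) //; apply/funext => x; apply/propext.
- by rewrite (_ : [set _ | _] = set0) //; apply/funext => x; apply/propext.
- by rewrite (_ : [set _ | _] = set0) //; apply/funext => x; apply/propext.
rewrite (_ : [set _ | _] = X i @^-1` [set a] `&` [set x | [seq X i x | i <- s] = w]).
  exact: measurableI.
apply/funext => x /=; apply/propext; split; first by case=> -> ->.
by case=> -> ->.
Qed.

Lemma meas_blkQ (Q : seq A -> Prop) t m : measurable [set x | Q (blk X t m x)].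
Proof.
pose F l := [set x | match (pickle_inv l : option (seq A)) with
                     | Some w => Q w /\ blk X t m x = w | None => False end].
rewrite (_ : [set _ | _] = \bigcup_l F l).
  apply: bigcupT_measurable => l; rewrite /F.
  case: (pickle_inv l) => [w|]; last by rewrite (_ : [set _ | _] = set0) //; apply/funext => x; apply/propext.
  case: (pselect (Q w)) => Qw.
    rewrite (_ : [set _ | _] = [set x | blk X t m x = w]); last first.
      by apply/funext => x; apply/propext; split => [[]|].
    have := meas_map [seq (t + i%:Z)%R | i <- iota 1 m] w; congr (measurable _).
    by apply/funext => x /=; rewrite /blk -map_comp.
  by rewrite (_ : [set _ | _] = set0) //; apply/funext => x; apply/propext; split => [[]|].
apply/funext => x; apply/propext; split.
  by move=> Qx; exists (pickle (blk X t m x)) => //; rewrite /F /= pickleK_inv.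
case=> l _; rewrite /F /=; case: (pickle_inv l) => [w|] //; by case=> ? ->.
Qed.

Lemma meas_fun_blk (d' : measure_display) (Y : measurableType d') (h : seq A -> Y) t m :
  measurable_fun setT (fun x => h (blk X t m x)).
Proof. by move=> _ B mB; rewrite setTI; exact: (meas_blkQ (fun w => B (h w))). Qed.
End Meas.
Section Prob.
Context {d : measure_display} {T : measurableType d} {R : realType}.
Context (P : probability T R) {A : countType}.
Context (X : int -> T -> A) (hX : forall (i : int) (a : A), measurable (X i @^-1` [set a])).
Context (hS : stationary P X).
Context (a0 : A) (c K : R) (K0 : 0 <= K) (c0 : 0 <= c).
Context (hFE : forall (n m : nat) (w u : seq A), (0 < n)%N -> (0 < m)%N ->
      (0 < P [set x : T | blk X 0 n x = w])%E ->
      (P [set x : T | blk X 0 n x = w /\ blk X n%:Z m x = u] <=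
        (K * c ^+ m)%:E * P [set x : T | blk X 0 n x = w])%E).

Lemma shift t m w : P [set x | blk X t m x = w] = P [set x | blk X 0 m x = w].
Proof.
have := hS [seq i%:Z | i <- iota 1 m] t w.
have -> : [set x | [seq X i x | i <- [seq i%:Z | i <- iota 1 m]] = w] = [set x | blk X 0 m x = w].
  by apply/funext => x /=; rewrite /blk -map_comp; congr (_ = _); apply: eq_map => i /=; rewrite add0r.
have -> // : [set x | [seq X (i + t) x | i <- [seq i%:Z | i <- iota 1 m]] = w] = [set x | blk X t m x = w].
by apply/funext => x /=; rewrite /blk -map_comp; congr (_ = _); apply: eq_map => i /=; rewrite addrC.
Qed.

Lemma size_per p k v : size (per a0 p k v) = k.
Proof. by rewrite size_mkseq. Qed.

Lemma meas_rep (i : int) p k : measurable [set x | blk X i k x = blk X (i + p%:Z) k x].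
Proof.
  pose Q (w : seq A) := take k w = take k (drop p w).
  have := meas_blkQ hX Q i (p + k).
  congr (measurable _); apply/funext => x /=; rewrite /Q.
  by rewrite drop_blk addnC take_blk take_oversize ?size_blk.
Qed.

Lemma rep_bound (i : int) p k : (0 < p)%N -> (0 < k)%N ->
  (P [set x | blk X i k x = blk X (i + p%:Z) k x] <= (K * c ^+ k)%:E)%E.
Proof.
move=> p0 k0.
pose F l := [set x | match (pickle_inv l : option (seq A)) with
      Some v => blk X i (p + k) x = v ++ per a0 p k v | None => False end].
pose B l := [set x | match (pickle_inv l : option (seq A)) with
      Some v => blk X 0 p x = v | None => False end].
have mF l : measurable (F l).
  exact: (meas_blkQ hX (fun w => match (pickle_inv l : option (seq A)) with
      Some v => w = v ++ per a0 p k v | None => False end) i (p + k)).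
have mB l : measurable (B l).
  exact: (meas_blkQ hX (fun w => match (pickle_inv l : option (seq A)) with
      Some v => w = v | None => False end) 0 p).
have mE := meas_rep i p k.
have E1 : (P [set x | blk X i k x = blk X (i + p%:Z) k x] <= P (\bigcup_l F l))%E.
  apply: le_measure; rewrite ?inE //; first exact: bigcupT_measurable.
  move=> x /= Ex; exists (pickle (blk X i p x)) => //.
  rewrite /F /= pickleK_inv blk_split; congr (_ ++ _); exact: per_blk.
have trivF : trivIset setT F.
  move=> l l' _ _ [x [Fl Fl']]; move: Fl Fl'; rewrite /F /=.
  case El: (pickle_inv l) => [v|] //; case El': (pickle_inv l') => [v'|] // -> h.
  have hs := congr1 size h; rewrite !size_cat !size_per in hs.
  have hv : size v = size v' by apply/eqP; rewrite -(eqn_add2r k) hs.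
  move/eqP: h; rewrite eqseq_cat // => /andP[/eqP vv _].
  have e1 := @pickle_invK (seq A) l; rewrite El /= in e1.
  have e2 := @pickle_invK (seq A) l'; rewrite El' /= in e2.
  by rewrite -e1 -e2 vv.
have trivB : trivIset setT B.
  move=> l l' _ _ [x [Fl Fl']]; move: Fl Fl'; rewrite /B /=.
  case El: (pickle_inv l) => [v|] //; case El': (pickle_inv l') => [v'|] // -> vv.
  have e1 := @pickle_invK (seq A) l; rewrite El /= in e1.
  have e2 := @pickle_invK (seq A) l'; rewrite El' /= in e2.
  by rewrite -e1 -e2 vv.
apply: (le_trans E1).
rewrite (@measure_semi_bigcup _ _ _ P F mF trivF (bigcupT_measurable _ mF)).
have E3 : (\sum_(l <oo) P (F l) <= \sum_(l <oo) ((K * c ^+ k)%:E * P (B l)))%E.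
  apply: lee_nneseries => l _; first by move=> _; exact: measure_ge0.
  rewrite /F /B /=; case El: (pickle_inv l) => [v|]; last first.
    by rewrite (_ : [set x | False] = set0) ?measure0 ?mule0 //; apply/funext => x; apply/propext.
  rewrite shift.
  have sub : [set x | blk X 0 (p + k) x = v ++ per a0 p k v] `<=`
             [set x | blk X 0 p x = v /\ blk X p%:Z k x = per a0 p k v].
    move=> x /=; rewrite blk_split add0r => h.
    have hs := congr1 size h; rewrite !size_cat !size_blk size_per in hs.
    have hv : size (blk X 0 p x) = size v by rewrite size_blk; apply/eqP; rewrite -(eqn_add2r k) hs.
    by move/eqP: h; rewrite eqseq_cat // => /andP[/eqP -> /eqP ->].
  have mH : measurable [set x | blk X 0 p x = v /\ blk X p%:Z k x = per a0 p k v].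
    have := meas_blkQ hX (fun w : seq A => take p w = v /\ drop p w = per a0 p k v) 0 (p + k).
    by congr (measurable _); apply/funext => x /=; rewrite take_blk drop_blk add0r.
  have mG : measurable [set x | blk X 0 (p + k) x = v ++ per a0 p k v].
    exact: (meas_blkQ hX (fun w : seq A => w = v ++ per a0 p k v) 0 (p + k)).
  have mBv : measurable [set x | blk X 0 p x = v].
    exact: (meas_blkQ hX (fun w : seq A => w = v) 0 p).
  apply: (le_trans (le_measure _ (mem_set mG) (mem_set mH) sub)).
  have := measure_ge0 P [set x | blk X 0 p x = v]; rewrite le_eqVlt => /orP[/eqP B0|Bpos].
    rewrite -B0 mule0 B0; apply: (le_measure _ (mem_set mH) (mem_set mBv)).
    by move=> x [].
  exact: hFE.
apply: (le_trans E3).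
rewrite nneseriesZl; last by move=> l _; exact: measure_ge0.
rewrite -(@measure_semi_bigcup _ _ _ P B mB trivB (bigcupT_measurable _ mB)).
rewrite -[X in (_ <= X)%E]mule1; apply: lee_wpmul2l.
  by rewrite lee_fin mulr_ge0 // exprn_ge0.
exact: probability_le1 (bigcupT_measurable _ mB).
Qed.
Lemma maxrep_bound n k : (0 < k)%N ->
  (P [set x | (k <= maxrep (blk X 0 n x))%N] <= ((K * c ^+ k) *+ (n.+1 * n.+1))%:E)%E.
Proof.
move=> k0.
pose H (i j : nat) := [set x | let w := blk X 0 n x in [/\ i != j, (i + k <= n)%N, (j + k <= n)%N &
     take k (drop i w) = take k (drop j w)]].
pose G (i : nat) := \big[setU/set0]_(j < n.+1) H i j.
have mH i j : measurable (H i j).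
  exact: (meas_blkQ hX (fun w : seq A => [/\ i != j, (i + k <= n)%N, (j + k <= n)%N &
     take k (drop i w) = take k (drop j w)]) 0 n).
have mG i : measurable (G i) by apply: bigsetU_measurable => j _; exact: mH.
have mE : measurable [set x | (k <= maxrep (blk X 0 n x))%N].
  exact: (meas_blkQ hX (fun w : seq A => (k <= maxrep w)%N) 0 n).
have bH i j : (P (H i j) <= (K * c ^+ k)%:E)%E.
  wlog ij : i j / (i < j)%N.
    move=> W; case: (ltngtP i j) => [/W//|ji|<-].
      have -> : H i j = H j i; last exact: W.
      by apply/funext => x /=; apply/propext; split => -[? ? ? ?]; split => //; rewrite eq_sym.
    have -> : H i i = set0.
      apply/funext => x /=; apply/propext; split => //. by case; rewrite eqxx.
    by rewrite measure0 lee_fin mulr_ge0 // exprn_ge0.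
  have sub : H i j `<=` [set y | blk X i%:Z k y = blk X (i%:Z + (j - i)%N%:Z) k y].
    move=> y Hy; case: Hy => _ ik jk e; move: e.
    rewrite (take_drop_blk _ _ ik) (take_drop_blk _ _ jk) => e.
    by rewrite /= -PoszD (subnKC (ltnW ij)) e.
  apply: le_trans (le_measure _ (mem_set (mH i j)) (mem_set (meas_rep _ _ _)) sub) _.
  by apply: rep_bound => //; rewrite subn_gt0.
have sumc (N : nat) (y : R) (f : nat -> \bar R) : (forall l, (f l <= y%:E)%E) ->
    (\sum_(l < N) f l <= (y *+ N)%:E)%E.
  move=> hf; have -> : ((y *+ N)%:E) = \sum_(l < N) y%:E by rewrite sumEFin sumr_const card_ord.
  by apply: lee_sum => l _; exact: hf.
have bG i : (P (G i) <= ((K * c ^+ k) *+ n.+1)%:E)%E.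
  have h := @content_subadditive _ _ _ P (G i) (H i) n.+1 (fun l _ => mH i l) (mG i) (fun y hy => hy).
  apply: le_trans; first exact: h.
  apply: (sumc n.+1 (K * c ^+ k) (fun l => P (H i l))) => l; exact: bH.
have h := @content_subadditive _ _ _ P _ G n.+1 (fun l _ => mG l) mE.
apply: le_trans; first apply: h.
- move=> y /= ky; have [i [j [ij ik jk e]]] := maxrep_ge ky k0.
  rewrite size_blk in ik jk.
  rewrite -bigcup_mkord; exists i; first by rewrite /= ltnS; apply: leq_trans ik; rewrite leq_addr.
  rewrite /G -bigcup_mkord; exists j; first by rewrite /= ltnS; apply: leq_trans jk; rewrite leq_addr.
  by split.
by rewrite mulrnA; apply: (sumc n.+1 _ (fun l => P (G l))) => l; exact: bG.
Qed.
End Prob.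
Section Analytic.
Context {R : realType}.

Lemma analytic (q c K : R) (n k : nat) : 0 < q -> 0 < c -> c < 1 -> 0 <= K -> (2 <= n)%N ->
  (q + 3) / (- ln c) * ln n%:R <= k%:R ->
  (n%:R / ln n%:R) `^ q * ((K * c ^+ k) *+ (n.+1 * n.+1)) <= 4 * K * ((ln 2)^-1 `^ q).
Proof.
move=> q0 c0 c1 K0 n2 hk.
set N : R := n%:R; set L := ln N.
have N1 : 1 < N by rewrite /N ltr1n.
have N0 : 0 < N by lra.
have L2 : ln 2 <= L by rewrite ler_ln ?posrE ?N0 // /N ler_nat.
have l20 : 0 < ln (2 : R) by rewrite ln_gt0 //; lra.
have L0 : 0 < L by lra.
have NL : expR L = N by rewrite /L lnK ?posrE.
have lc : ln c < 0 by rewrite ln_lt0 // c0 c1.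
set C0 := (ln 2)^-1 `^ q.
have C00 : 0 <= C0 by exact: powR_ge0.
have S1 : (N / L) `^ q <= expR (q * L) * C0.
  apply: (@le_trans _ _ ((N * (ln 2)^-1) `^ q)).
    apply: ge0_ler_powR.
    - exact: ltW.
    - by rewrite nnegrE divr_ge0 // ltW.
    - by rewrite nnegrE mulr_ge0 // ?invr_ge0 ltW.
    by rewrite ler_pM2l // lef_pV2 ?posrE.
  rewrite (powRM _ (ltW N0)); last by rewrite invr_ge0 ltW.
  have -> : N `^ q = expR (q * L) by rewrite /powR gt_eqF.
  by rewrite /C0.
have S2 : c ^+ k <= expR (- (q + 3) * L).
  rewrite -(powR_mulrn _ (ltW c0)).
  apply: (@le_trans _ _ (c `^ ((q + 3) / (- ln c) * L))).
    by apply: ger_powR => //; rewrite c0 ltW.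
  rewrite /powR gt_eqF // le_eqVlt; apply/orP; left; apply/eqP; congr expR.
  field; lra.
have S3 : ((n.+1 * n.+1)%N%:R : R) <= 4 * expR L * expR L.
  have e : ((n.+1 * n.+1)%N%:R : R) = (N + 1) * (N + 1) by rewrite natrM /N -addn1 natrD.
  rewrite e NL; nra.
have E1 : 0 <= c ^+ k by exact: exprn_ge0 (ltW c0).
rewrite -(mulr_natr (K * c ^+ k)).
apply: (@le_trans _ _ ((expR (q * L) * C0) * (K * expR (- (q + 3) * L) * (4 * expR L * expR L)))).
  apply: ler_pM => //; first exact: powR_ge0.
    by rewrite mulr_ge0 // mulr_ge0.
  apply: ler_pM => //; first by rewrite mulr_ge0.
  by apply: ler_wpM2l.
have ee : expR (q * L) * expR (- (q + 3) * L) * expR L * expR L = expR (- L).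
  by rewrite -!expRD; congr expR; ring.
have e1 : expR (- L) <= 1 by rewrite expR_le1; lra.
have e2 : 0 <= 4 * K * C0 by rewrite mulr_ge0 // mulr_ge0.
rewrite (_ : _ * _ = 4 * K * C0 * expR (- L)); last by rewrite -ee; ring.
nra.
Qed.
End Analytic.
Theorem lemma2 (d : measure_display) (T : measurableType d) (R : realType)
  (P : probability T R) (A : countType) (X : int -> T -> A) :
  process X -> stationary P X -> finite_energy P X ->
  forall q : R, 0 < q ->
  exists M : R, forall n : nat, (2 <= n)%N ->
    (\int[P]_x (((maxrep (blk X 0 n x))%:R / ln (n%:R)) `^ q)%:E <= M%:E)%E.
Proof.
move=> hX hS [c [K [c1 hfe]]] q q0.
have /set0P[x0 _] : [set: T] != set0.
  apply/eqP => h; have := probability_setT P; rewrite h measure0 => /eqP.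
  by rewrite eq_sym onee_eq0.
pose a0 := X 0 x0.
pose c' := Num.max c 2^-1. pose K' := Num.max K 0.
have c'0 : 0 < c' by rewrite /c' lt_max; apply/orP; right; rewrite invr_gt0.
have c'1 : c' < 1 by rewrite /c' gt_max c1 /=; rewrite invf_lt1 //; lra.
have K'0 : 0 <= K' by rewrite /K' le_max lexx orbT.
have hFE : forall (n m : nat) (w u : seq A), (0 < n)%N -> (0 < m)%N ->
      (0 < P [set x : T | blk X 0 n x = w])%E ->
      (P [set x : T | blk X 0 n x = w /\ blk X n%:Z m x = u] <=
        (K' * c' ^+ m)%:E * P [set x : T | blk X 0 n x = w])%E.
  move=> n m w u n0 m0 Bpos.
  have mB : measurable [set x : T | blk X 0 n x = w].
    exact: (meas_blkQ hX (fun v : seq A => v = w) 0 n).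
  have mG (m' : nat) (u' : seq A) : measurable [set x : T | blk X 0 n x = w /\ blk X n%:Z m' x = u'].
    have := meas_blkQ hX (fun v : seq A => take n v = w /\ drop n v = u') 0 (n + m').
    by congr (measurable _); apply/funext => x /=; rewrite take_blk drop_blk add0r.
  have fin (S : set T) : measurable S -> P S \is a fin_num.
    move=> mS; rewrite ge0_fin_numE ?measure_ge0 //.
    exact: (le_lt_trans (probability_le1 P mS) (ltry _)).
  have fB0 : 0 < fine (P [set x : T | blk X 0 n x = w]).
    by apply: fine_gt0; rewrite Bpos /= (le_lt_trans (probability_le1 P mB) (ltry _)).
  have r0 m' u' : 0 <= fine (P [set x : T | blk X 0 n x = w /\ blk X n%:Z m' x = u'])
                        / fine (P [set x : T | blk X 0 n x = w]).
    by rewrite divr_ge0 // ?fine_ge0 ?measure_ge0 // ltW.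
  have hr := hfe n m w u n0 m0 Bpos.
  have key : K * c ^+ m <= K' * c' ^+ m.
    case: (leP 0 c) => c0.
      apply: (@le_trans _ _ (K' * c ^+ m)).
        by apply: ler_wpM2r; [exact: exprn_ge0 | rewrite /K' le_max lexx].
      apply: ler_wpM2l => //; apply: lerXn2r; rewrite ?nnegrE ?c0 ?(ltW c'0) //.
      by rewrite /c' le_max lexx.
    have h1 := le_trans (r0 m u) hr.
    have h2 := le_trans (r0 m.+1 u) (hfe n m.+1 w u n0 isT Bpos).
    rewrite exprS mulrCA in h2.
    have h3 : 0 <= K' * c' ^+ m by rewrite mulr_ge0 // exprn_ge0 // ltW.
    nra.
  rewrite -(fineK (fin _ (mG m u))) -(fineK (fin _ mB)) -EFinM lee_fin.
  rewrite ler_pdivrMr // in hr.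
  apply: (le_trans hr); apply: ler_wpM2r; [exact: ltW | exact: key].
have lc : ln c' < 0 by rewrite ln_lt0 // c'0 c'1.
pose a := (q + 3) / (- ln c').
have a0' : 0 < a by rewrite /a divr_gt0 //; lra.
exists (a `^ q + 4 * K' * ((ln 2)^-1 `^ q)) => n n2.
pose L := ln (n%:R : R).
have L0 : 0 < L by rewrite /L ln_gt0 // ltr1n.
pose k := (Num.truncn (a * L)).+1.
have aL0 : 0 <= a * L by rewrite mulr_ge0 // ltW.
have hk : a * L <= k%:R by have /andP[_ /ltW] := truncn_itv aL0.
have hk' : (Num.truncn (a * L))%:R <= a * L by have /andP[] := truncn_itv aL0.
pose E := [set x | (k <= maxrep (blk X 0 n x))%N].
pose B := ((n%:R : R) / L) `^ q.
have mE : measurable E by exact: (meas_blkQ hX (fun w : seq A => (k <= maxrep w)%N) 0 n).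
have bound := maxrep_bound hX hS a0 K'0 (ltW c'0) hFE n (ltn0Sn _ : (0 < k)%N).
pose g x := ((a `^ q)%:E + (B * ((k <= maxrep (blk X 0 n x))%N%:R))%:E)%E.
have I1 : (\int[P]_x (((maxrep (blk X 0 n x))%:R / ln (n%:R)) `^ q)%:E <= \int[P]_x g x)%E.
  apply: ge0_le_integral => //.
  - by move=> x _; rewrite lee_fin; exact: powR_ge0.
  - move=> _ Y mY; rewrite setTI.
    exact: (meas_blkQ hX (fun w => Y ((((maxrep w)%:R / L) `^ q)%:E : \bar R)) 0 n).
  - move=> _ Y mY; rewrite setTI.
    exact: (meas_blkQ hX (fun w => Y ((a `^ q)%:E + (B * ((k <= maxrep w)%N%:R))%:E)%E) 0 n).
  move=> x _; rewrite /g -EFinD lee_fin.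
  have ms := maxrep_size (blk X 0 n x); rewrite size_blk in ms.
  case: (leqP k (maxrep (blk X 0 n x))) => km.
    rewrite mulr1; apply: (@le_trans _ _ B); last by rewrite lerDr powR_ge0.
    rewrite /B -/L; apply: ge0_ler_powR.
    - exact: ltW.
    - by rewrite nnegrE divr_ge0 // ltW.
    - by rewrite nnegrE divr_ge0 // ltW.
    by rewrite ler_pM2r ?invr_gt0 // ler_nat.
  rewrite mulr0 addr0 -/L; apply: ge0_ler_powR.
  - exact: ltW.
  - by rewrite nnegrE divr_ge0 // ltW.
  - by rewrite nnegrE ltW.
  rewrite ler_pdivrMr //; apply: le_trans hk'; rewrite ler_nat -ltnS; exact: km.
apply: (le_trans I1).
have B0 : 0 <= B by exact: powR_ge0.
rewrite /g ge0_integralD //; last 3 first.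
- by move=> x _; rewrite lee_fin powR_ge0.
- by move=> x _; rewrite lee_fin mulr_ge0 // ler0n.
- move=> _ Y mY; rewrite setTI.
  exact: (meas_blkQ hX (fun w => Y ((B * ((k <= maxrep w)%N%:R))%:E : \bar R)) 0 n).
have -> : (\int[P]_x (a `^ q)%:E = (a `^ q)%:E)%E.
  rewrite integral_cst //; transitivity ((a `^ q)%:E * 1)%E; last exact: mule1.
  by congr (_ * _)%E; exact: probability_setT.
rewrite (eq_integral (fun x => (B%:E * (\1_E x)%:E)%E)); last first.
  move=> x _; rewrite indicE -EFinM; congr (_%:E); congr (_ * _%:R).
  first [ by rewrite /E inE | by rewrite /E in_setE | by rewrite mem_setE | (apply/idP/idP => [h|/set_mem //]; exact: mem_set)].
rewrite ge0_integralZl_EFin //; last first.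
  by apply/measurable_realfun.measurable_EFinP; exact: measurable_realfun.measurable_indic.
rewrite integral_indic // setIT EFinD; apply: leeD2l.
apply: (le_trans (lee_wpmul2l _ bound)); first by rewrite lee_fin.
rewrite -EFinM lee_fin; exact: analytic.
Qed.
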